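(* If the root system $\Phi$ is of type $C_n$, the closures of the regions of the hyperplane arrangement $\mathcal H_\Phi$ coincide with the cones on the facets of the root polytope $\mathcal P_\Phi$.
   Context: $\Phi$ is an irreducible root system of rank $n$ in the Euclidean space $E=\operatorname{span}_{\mathbb R}\Phi$; $\mathcal P_\Phi=\operatorname{conv}(\Phi)$. $\mathcal H_\Phi$ is the central hyperplane arrangement in $E$ consisting of the linear hyperplanes $\operatorname{span}_{\mathbb R}F$ for all faces $F$ of $\mathcal P_\Phi$ of codimension 2 (i.e. of dimension $n-2$). A region of $\mathcal H_\Phi$ is a connected component of $E\setminus\bigcup_{H\in\mathcal H_\Phi}H$. The cone on a facet $F$ is $\{tx\mid t\ge0,\ x\in F\}$. *)

(* Defs.v *)
From HB Require Import structures.
From mathcomp Require Import all_boot all_order all_algebra.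
From mathcomp Require Import all_classical all_reals topology normedtype.
Import numFieldNormedType.Exports.
Set Implicit Arguments. Unset Strict Implicit. Unset Printing Implicit Defensive.
Import Order.TTheory GRing.Theory Num.Theory.
Local Open Scope classical_set_scope.
Local Open Scope ring_scope.

Section Defs.
Variables (R : realType) (n : nat).
Local Notation V := 'rV[R]_n.

Definition evec (i : 'I_n) : V := delta_mx 0 i.

Definition dotv (x y : V) : R := \sum_(i < n) x 0 i * y 0 i.

Definition rootsC : set V :=
  [set x | (exists i : 'I_n, x = 2%:R *: evec i \/ x = - (2%:R *: evec i)) \/
           (exists (i j : 'I_n) (s1 s2 : bool), i != j /\
              x = (-1) ^+ s1 *: evec i + (-1) ^+ s2 *: evec j)].

Definition conv (S : set V) : set V :=
  [set x | exists (k : nat) (p : 'I_k -> V) (w : 'I_k -> R),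
     (forall i, S (p i)) /\ (forall i, 0 <= w i) /\
     \sum_(i < k) w i = 1 /\ x = \sum_(i < k) w i *: p i].

(* F is a face of P: the intersection of P with a (weakly) supporting
   hyperplane (this includes P itself and the empty face). *)
Definition is_face (P F : set V) : Prop :=
  exists (c : V) (b : R), (forall x, P x -> dotv c x <= b) /\
    F = [set x | P x /\ dotv c x = b].

(* F is nonempty and its affine hull has dimension d *)
Definition affdim (F : set V) (d : nat) : Prop :=
  exists x0, F x0 /\ exists s : seq V, (forall y, y \in s -> F y) /\
    \dim <<[seq y - x0 | y <- s]>>%VS = d /\
    (forall x, F x -> (x - x0) \in <<[seq y - x0 | y <- s]>>%VS).

Definition lin_span (S : set V) : set V :=
  [set x | exists s : seq V, (forall y, y \in s -> S y) /\ x \in <<s>>%VS].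

Definition arrangement (P : set V) : set (set V) :=
  [set H | exists F, is_face P F /\ affdim F (n - 2) /\ H = lin_span F].

Definition regions (A : set (set V)) : set (set V) :=
  [set C | exists x : V, (~` (\bigcup_(H in A) H)) x /\
     C = connected_component (~` (\bigcup_(H in A) H)) x].

Definition facets (P : set V) : set (set V) :=
  [set F | is_face P F /\ affdim F (n - 1)].

Definition cone (F : set V) : set V :=
  [set y | exists t x, 0 <= t /\ F x /\ y = t *: x].

End Defs.

(* Main.v *)
Require Import Defs.
From HB Require Import structures.
From mathcomp Require Import all_boot all_order all_algebra.
From mathcomp Require Import all_classical all_reals topology normedtype.
From mathcomp Require Import ring lra zify.
Import numFieldNormedType.Exports.
Import Order.TTheory GRing.Theory Num.Theory.
Set Implicit Arguments. Unset Strict Implicit. Unset Printing Implicit Defensive.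
Local Open Scope classical_set_scope.
Local Open Scope ring_scope.

Section Alg.
Variables (R : realType) (n : nat).
Local Notation V := 'rV[R]_n.
Local Notation dotv := (@dotv R n).
Local Notation evec := (@evec R n).

Lemma evecE i j : evec i 0 j = (i == j)%:R.
Proof. by rewrite /Defs.evec mxE /= eq_sym. Qed.

Lemma sum_delta (f : 'I_n -> R) j : \sum_i (i == j)%:R * f i = f j.
Proof.
rewrite (bigD1 j) //= eqxx mul1r big1 ?addr0 // => i /negbTE ->; by rewrite mul0r.
Qed.

Lemma dotvD c x y : dotv c (x + y) = dotv c x + dotv c y.
Proof. by rewrite /Defs.dotv -big_split; apply: eq_bigr => i _; rewrite mxE mulrDr. Qed.
Lemma dotvZ c a x : dotv c (a *: x) = a * dotv c x.
Proof. by rewrite /Defs.dotv mulr_sumr; apply: eq_bigr => i _; rewrite mxE mulrCA. Qed.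
Lemma dotv0 c : dotv c 0 = 0.
Proof. by rewrite -(scale0r 0) dotvZ mul0r. Qed.
Lemma dotvN c x : dotv c (- x) = - dotv c x.
Proof. by rewrite -scaleN1r dotvZ mulN1r. Qed.
Lemma dotvB c x y : dotv c (x - y) = dotv c x - dotv c y.
Proof. by rewrite dotvD dotvN. Qed.
Lemma dotv_evec j x : dotv (evec j) x = x 0 j.
Proof. by rewrite /Defs.dotv -(sum_delta (fun i => x 0 i) j); apply: eq_bigr => i _; rewrite evecE eq_sym. Qed.
Lemma dotv_evecr c j : dotv c (evec j) = c 0 j.
Proof. by rewrite /Defs.dotv -(sum_delta (fun i => c 0 i) j); apply: eq_bigr => i _; rewrite evecE mulrC eq_sym. Qed.

Lemma span_dot0 c (X : seq V) : (forall y, y \in X -> dotv c y = 0) ->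
  forall x, x \in <<X>>%VS -> dotv c x = 0.
Proof.
move=> HX x hx; have hx' : x \in <<in_tuple X>>%VS by [].
rewrite (coord_span hx').
apply: (big_ind (fun v => dotv c v = 0)); first exact: dotv0.
  by move=> u v hu hv; rewrite dotvD hu hv addr0.
move=> i _; rewrite dotvZ HX ?mulr0 //.
by apply: mem_nth; exact: ltn_ord.
Qed.

Lemma span_coord0 j (X : seq V) : (forall y, y \in X -> y 0 j = 0) ->
  forall x, x \in <<X>>%VS -> x 0 j = 0.
Proof.
move=> HX x hx; rewrite -dotv_evec; apply: (span_dot0 _ hx) => y /HX.
by rewrite dotv_evec.
Qed.


Section Dec.
Variables (F : set V) (c : V) (b : R) (x0 : V) (s : seq V).
Hypotheses (hb : b != 0) (hF : forall x, F x -> dotv c x = b) (Fx0 : F x0)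
  (hs : forall y, y \in s -> F y).
Let D := <<[seq y - x0 | y <- s]>>%VS.

Lemma Dc w : w \in D -> dotv c w = 0.
Proof.
apply: span_dot0 => {}w /mapP [y ys ->]; by rewrite dotvB !hF ?subrr //; apply hs.
Qed.

Lemma cap0 : (D :&: <[x0]>)%VS = 0%VS.
Proof.
apply/eqP; rewrite -subv0; apply/subvP => w.
rewrite memv_cap memv0 => /andP [wD /vlineP [a wa]].
have := Dc wD; subst w; rewrite dotvZ hF // => /eqP; rewrite mulf_eq0 (negbTE hb) orbF => /eqP a0.
by rewrite a0 scale0r.
Qed.

Lemma x0n : x0 != 0.
Proof. by apply: contraNneq hb => x00; rewrite -(hF Fx0) x00 dotv0. Qed.

Lemma dimD1 : \dim (D + <[x0]>) = (\dim D).+1.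
Proof. by rewrite dimv_disjoint_sum ?cap0 // dim_vline x0n addn1. Qed.

Lemma inD_x0 x : x \in (D + <[x0]>)%VS -> F x -> x - x0 \in D.
Proof.
move=> /memv_addP [u uD [v /vlineP [a ->] ->]] Fx.
have := hF Fx; rewrite dotvD Dc // add0r dotvZ hF // => /(congr1 (fun r => r / b)).
rewrite divff // mulfK // => ->; by rewrite scale1r addrK.
Qed.

End Dec.

Lemma affdim_dim (F : set V) c (b : R) d (t : seq V) :
  b != 0 -> (forall x, F x -> dotv c x = b) -> (forall y, y \in t -> F y) ->
  (forall x, F x -> x \in <<t>>%VS) -> affdim F d -> \dim <<t>> = d.+1.
Proof.
move=> hb hF ht hFt [x0 [Fx0 [s [hs [hd hsub]]]]].
rewrite -hd -(dimD1 hb hF Fx0 hs); congr (\dim _).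
apply/subv_anti/andP; split.
- apply/span_subvP => y yt; have Fy := ht _ yt; rewrite -(subrK x0 y).
  by apply: memv_add; [exact: hsub | exact: memv_line].
- rewrite subv_add; apply/andP; split; last by rewrite -memvE; exact: hFt.
  apply/span_subvP => w /mapP [y ys ->]; apply: memvB; apply: hFt; [exact: hs | exact Fx0].
Qed.

Lemma affdim_make (F : set V) c (b : R) (t : seq V) x0 :
  b != 0 -> (forall x, F x -> dotv c x = b) -> (forall y, y \in t -> F y) ->
  (forall x, F x -> x \in <<t>>%VS) -> F x0 -> affdim F (\dim <<t>>).-1.
Proof.
move=> hb hF ht hFt Fx0.
have eqt : <<t>>%VS = (<<[seq y - x0 | y <- t]>> + <[x0]>)%VS.
  apply/subv_anti/andP; split.
  - apply/span_subvP => y yt; rewrite -(subrK x0 y).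
    by apply: memv_add; [apply: memv_span; exact: map_f | exact: memv_line].
  - rewrite subv_add; apply/andP; split; last by rewrite -memvE; exact: hFt.
    apply/span_subvP => w /mapP [y ys ->]; apply: memvB; apply: hFt; [exact: ht | exact Fx0].
exists x0; split => //; exists t; split => //; split.
  by rewrite eqt (dimD1 hb hF Fx0 ht).
move=> x Fx; apply: (inD_x0 hb hF Fx0 ht) => //; rewrite -eqt; exact: hFt.
Qed.


Definition l1 (x : V) := \sum_i `|x 0 i|.
Local Notation P := (conv (@rootsC R n)).
Definition vert (i : 'I_n) (b : bool) : V := (2 * (-1) ^+ b) *: evec i.

Lemma l1D x y : l1 (x + y) <= l1 x + l1 y.
Proof. by rewrite /l1 -big_split ler_sum // => i _; rewrite mxE ler_normD. Qed.
Lemma l1Z a x : l1 (a *: x) = `|a| * l1 x.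
Proof. by rewrite /l1 mulr_sumr; apply: eq_bigr => i _; rewrite mxE normrM. Qed.
Lemma l1N x : l1 (- x) = l1 x.
Proof. by rewrite -scaleN1r l1Z normrN1 mul1r. Qed.
Lemma l1_evec i : l1 (evec i) = 1.
Proof.
rewrite /l1 -(sum_delta (fun _ => 1) i); apply: eq_bigr => j _.
by rewrite evecE mulr1 eq_sym; case: (j == i); rewrite ?normr1 ?normr0.
Qed.
Lemma l1_ge0 x : 0 <= l1 x.
Proof. by apply: sumr_ge0 => i _. Qed.

Lemma root_l1 p : rootsC p -> l1 p <= 2.
Proof.
case=> [[i [->|->]]|[i [j [s1 [s2 [_ ->]]]]]].
- by rewrite l1Z l1_evec mulr1 ger0_norm.
- by rewrite l1N l1Z l1_evec mulr1 ger0_norm.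
- apply: le_trans (l1D _ _) _; rewrite !l1Z !l1_evec !mulr1 !normrX normrN1 !expr1n.
  by [].
Qed.

Lemma conv_l1 x : P x -> l1 x <= 2.
Proof.
move=> [k [p [w [hp [hw [h1 ->]]]]]].
apply: (@le_trans _ _ (\sum_(i < k) w i * l1 (p i))).
  apply: (big_rec2 (fun v r => l1 v <= r)).
    by rewrite /l1 big1 // => i _; rewrite mxE normr0.
  move=> i v r _ hvr; apply: le_trans (l1D _ _) _; rewrite l1Z ger0_norm //.
  exact: lerD.
apply: (@le_trans _ _ (\sum_(i < k) w i * 2)).
  by apply: ler_sum => i _; apply: ler_wpM2l => //; exact: root_l1.
by rewrite -mulr_suml h1 mul1r.
Qed.

Lemma vert_root i b : rootsC (vert i b).
Proof.
left; exists i; case: b; [right|left]; rewrite /vert ?expr1 ?expr0 ?mulr1 //.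
by rewrite mulrN1 scaleNr.
Qed.

Lemma conv_root p : rootsC p -> P p.
Proof.
move=> hp; exists 1%N, (fun _ => p), (fun _ => 1); split => // ; split => //.
by rewrite !big_ord1 scale1r.
Qed.

Lemma vertE i b j : vert i b 0 j = (2 * (-1) ^+ b) * (i == j)%:R.
Proof. by rewrite mxE evecE. Qed.

Lemma row_expand (x : V) : x = \sum_i x 0 i *: evec i.
Proof.
apply/rowP => j; rewrite summxE -(sum_delta (fun i => x 0 i) j).
by apply: eq_bigr => i _; rewrite mxE evecE mulrC.
Qed.

Lemma conv_bd x : l1 x = 2 -> P x.
Proof.
move=> hx; exists n, (fun i => vert i (x 0 i < 0)), (fun i => `|x 0 i| / 2).
split; first by move=> i; exact: vert_root.
split; first by move=> i; rewrite divr_ge0.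
split; first by rewrite -mulr_suml -/(l1 x) hx divff // pnatr_eq0.
apply/rowP => j; rewrite summxE -(sum_delta (fun i => x 0 i) j).
apply: eq_bigr => i _; rewrite mxE vertE mulrA mulrC; congr (_ * _).
case: ltP => h; rewrite ?expr1 ?expr0.
  by rewrite ltr0_norm //; field.
by rewrite ger0_norm //; field.
Qed.


Lemma dot_le (c : V) M x : (forall i, `|c 0 i| <= M) -> dotv c x <= M * l1 x.
Proof.
move=> hc; rewrite /Defs.dotv /l1 mulr_sumr; apply: ler_sum => i _.
apply: le_trans (ler_norm _) _; rewrite normrM; apply: ler_wpM2r => //.
Qed.

Lemma key (c : V) M x j : (forall i, `|c 0 i| <= M) -> P x -> dotv c x = 2 * M ->
  M * `|x 0 j| <= c 0 j * x 0 j.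
Proof.
move=> hc Px hd.
have M0 : 0 <= M by apply: le_trans (hc j).
have hl := conv_l1 Px.
move: hd hl; rewrite /Defs.dotv (bigD1 j) //= => hd; rewrite /l1 (bigD1 j) //= => hl.
move: hd hl.
set S := \sum_(i | i != j) c 0 i * x 0 i; set T := \sum_(i | i != j) `|x 0 i|.
have hST : S <= M * T.
  rewrite /S /T mulr_sumr; apply: ler_sum => i _.
  apply: le_trans (ler_norm _) _; rewrite normrM; apply: ler_wpM2r => //.
move=> hd hl.
have : 0 <= M * (2 - `|x 0 j| - T) by apply: mulr_ge0 => //; lra.
rewrite !mulrBr; lra.
Qed.

Lemma free_sc (s : seq 'I_n) (a : 'I_n -> R) : uniq s -> (forall i, a i != 0) ->
  free [seq a i *: evec i | i <- s].
Proof.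
move=> + ha; elim: s => [|i s IH] /=; first by move=> _; exact: nil_free.
move=> /andP [ins us]; rewrite free_cons IH // andbT; apply/negP => hin.
have hz : (a i *: evec i) 0 i = 0.
  apply: (span_coord0 _ hin) => y /mapP [k ks ->]; rewrite mxE evecE.
  have -> : (k == i) = false by apply/negP => /eqP ki; move: ins; rewrite -ki ks.
  by rewrite mulr0.
by move: hz; rewrite mxE evecE eqxx mulr1; apply/eqP; exact: ha.
Qed.

Lemma dim_sc (s : seq 'I_n) (a : 'I_n -> R) : uniq s -> (forall i, a i != 0) ->
  \dim <<[seq a i *: evec i | i <- s]>> = size s.
Proof. by move=> us ha; have /eqP -> := free_sc us ha; rewrite size_map. Qed.

Lemma lin_span_eq (F : set V) (t : seq V) : (forall y, y \in t -> F y) ->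
  (forall x, F x -> x \in <<t>>%VS) -> lin_span F = [set x | x \in <<t>>%VS].
Proof.
move=> ht hF; apply/seteqP; split => x /=.
  move=> [s [hs hx]]; have : (<<s>> <= <<t>>)%VS.
    by apply/span_subvP => y ys; apply: hF; apply: hs.
  by move/subvP; apply.
by move=> hx; exists t.
Qed.

Lemma affdim_P d : affdim P d -> (n <= d)%N.
Proof.
move=> [x0 [Px0 [s [hs [<- hsub]]]]].
set D := <<[seq y - x0 | y <- s]>>%VS.
have hD : forall i, evec i \in D.
  move=> i; have h1 := hsub _ (conv_root (vert_root i false)).
  have h2 := hsub _ (conv_root (vert_root i true)).
  have := memvZ (4%:R^-1) (memvB h1 h2).
  rewrite opprB addrA subrK /vert -scalerBl expr0 expr1 scalerA.
  have -> : (4%:R^-1 * (2 * 1 - 2 * -1)) = 1 :> R by field.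
  by rewrite scale1r.
have h := dim_sc (enum_uniq 'I_n) (fun _ => oner_neq0 R).
apply: (@leq_trans (size (enum 'I_n))); first by rewrite size_enum_ord.
rewrite -h; apply: dimvS; apply/span_subvP => y /mapP [i _ ->].
by rewrite scale1r.
Qed.

Section Face.
Variables (c : V) (i0 : 'I_n).
Hypotheses (hmax : forall j, `|c 0 j| <= `|c 0 i0|) (hM : 0 < `|c 0 i0|).
Local Notation M := `|c 0 i0|.
Definition Fc := [set x | P x /\ dotv c x = 2 * M].
Definition Ic := [pred i | `|c 0 i| == M].
Definition tc := [seq vert i (c 0 i < 0) | i <- enum Ic].

Lemma dot_vert i : dotv c (vert i (c 0 i < 0)) = 2 * `|c 0 i|.
Proof.
rewrite dotvZ dotv_evecr; case: ltP => h; rewrite ?expr1 ?expr0.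
  by rewrite ltr0_norm //; ring.
by rewrite ger0_norm //; ring.
Qed.

Lemma Fc_bound x : P x -> dotv c x <= 2 * M.
Proof.
move=> Px; apply: le_trans (dot_le x hmax) _; rewrite mulrC.
by apply: ler_wpM2r; [exact: ltW | exact: conv_l1].
Qed.

Lemma tc_F y : y \in tc -> Fc y.
Proof.
move=> /mapP [i iI ->]; split; first exact/conv_root/vert_root.
by rewrite dot_vert; move: iI; rewrite mem_enum => /eqP ->.
Qed.

Lemma Fc_zero x j : Fc x -> ~~ Ic j -> x 0 j = 0.
Proof.
move=> [Px hd] hj; have := key j hmax Px hd.
have hlt : `|c 0 j| < M by rewrite lt_neqAle hj hmax.
have := ler_norm (c 0 j * x 0 j); rewrite normrM => h1 h2.
have : (M - `|c 0 j|) * `|x 0 j| <= 0 by lra.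
rewrite pmulr_rle0 ?subr_gt0 // normr_le0 => /eqP //.
Qed.

Lemma span_tc (x : V) : (forall j, ~~ Ic j -> x 0 j = 0) -> x \in <<tc>>%VS.
Proof.
move=> hx; rewrite (row_expand x) (bigID Ic) /= [X in _ + X]big1 ?addr0; last first.
  by move=> i hi; rewrite hx // scale0r.
apply: memv_suml => i hi.
have ha : (2 * (-1) ^+ (c 0 i < 0)%R) != 0 :> R.
  by rewrite mulf_eq0 negb_or pnatr_eq0 /= expf_neq0 // oppr_eq0 oner_eq0.
rewrite -[x 0 i](divfK ha) -scalerA; apply: memvZ; apply: memv_span.
by apply: map_f; rewrite mem_enum.
Qed.

Lemma span_tcE (x : V) : x \in <<tc>>%VS -> forall j, ~~ Ic j -> x 0 j = 0.
Proof.
move=> hx j hj; apply: (span_coord0 _ hx) => y /mapP [i iI ->].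
rewrite vertE; have -> : (i == j) = false; last by rewrite mulr0.
by apply/negP => /eqP ij; move: iI hj; rewrite mem_enum ij /= => /eqP ->; rewrite eqxx.
Qed.

Lemma Fc_span x : Fc x -> x \in <<tc>>%VS.
Proof. by move=> Fx; apply: span_tc => j; exact: Fc_zero. Qed.

Lemma dim_tc : \dim <<tc>> = #|Ic|.
Proof.
rewrite cardE; apply: (@dim_sc (enum Ic) (fun i => 2 * (-1) ^+ (c 0 i < 0)%R)).
  exact: enum_uniq.
by move=> i; rewrite mulf_eq0 negb_or pnatr_eq0 /= expf_neq0 // oppr_eq0 oner_eq0.
Qed.

Lemma Fc_i0 : Fc (vert i0 (c 0 i0 < 0)).
Proof. by split; [exact/conv_root/vert_root | rewrite dot_vert]. Qed.

Lemma Fc_dot x : Fc x -> dotv c x = 2 * M.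
Proof. by case. Qed.

Lemma twoM : 2 * M != 0.
Proof. by rewrite mulf_eq0 negb_or pnatr_eq0 /= gt_eqF. Qed.

End Face.


Definition orth (c : V) := [set y : V | forall i, 0 <= c 0 i * y 0 i].

Lemma cone_Fc (c : V) i0 (hmax : forall j, `|c 0 j| <= `|c 0 i0|) (hM : 0 < `|c 0 i0|) :
  (forall i, Ic c i0 i) -> cone (Fc c i0) = orth c.
Proof.
move=> hall; apply/seteqP; split => y /=.
  move=> [t [x [t0 [Fx ->]]]] i; rewrite mxE mulrCA; apply: mulr_ge0 => //.
  case: Fx => Px hd; apply: le_trans (key i hmax Px hd).
  by apply: mulr_ge0; [exact: ltW|].
move=> hy.
have hyi : forall i, c 0 i * y 0 i = `|c 0 i0| * `|y 0 i|.
  by move=> i; rewrite -(ger0_norm (hy i)) normrM (eqP (hall i)).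
have [->|yn] := eqVneq y 0.
  by exists 0, (vert i0 (c 0 i0 < 0)); split => //; split; [exact: Fc_i0|rewrite scale0r].
have lpos : 0 < l1 y.
  rewrite lt_def l1_ge0 andbT; apply/eqP => hl; move/eqP: yn; apply.
  apply/rowP => i; rewrite mxE; apply/normr0_eq0.
  exact: (psumr_eq0P (fun i _ => normr_ge0 (y 0 i)) hl).
have tn : l1 y / 2 != 0 by rewrite gt_eqF // divr_gt0.
exists (l1 y / 2), ((l1 y / 2)^-1 *: y); split; first by rewrite divr_ge0 // ltW.
split; last by rewrite scalerA divff // scale1r.
split.
  apply: conv_bd; rewrite l1Z ger0_norm ?invr_ge0 ?divr_ge0 ?ltW //; field.
  by rewrite gt_eqF.
rewrite dotvZ /Defs.dotv.
under eq_bigr do rewrite hyi.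
rewrite -mulr_sumr -/(l1 y); field; by rewrite gt_eqF.
Qed.

Lemma exists_max (c : V) (i : 'I_n) : exists i0, forall j, `|c 0 j| <= `|c 0 i0|.
Proof.
case: (@arg_maxP _ _ _ i predT (fun k => `|c 0 k|) isT) => k _ h.
by exists k => j; exact: h.
Qed.

Lemma face_cases (F : set V) x0 (i : 'I_n) : is_face P F -> F x0 ->
  F = P \/ exists (c : V) (i0 : 'I_n), (forall j, `|c 0 j| <= `|c 0 i0|) /\ 0 < `|c 0 i0| /\
    F = Fc c i0.
Proof.
move=> [c [b [hb ->]]] [Px0 hx0].
have [i0 hi0] := exists_max c i.
have [c0|cpos] := eqVneq `|c 0 i0| 0.
  left; have hc : forall x, dotv c x = 0.
    move=> x; rewrite /Defs.dotv big1 // => j _.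
    by have := hi0 j; rewrite c0 normr_le0 => /eqP ->; rewrite mul0r.
  apply/seteqP; split => x /=; first by case.
  by move=> Px; split => //; rewrite hc -hx0 hc.
right; exists c, i0.
have hM : 0 < `|c 0 i0| by rewrite lt_def cpos normr_ge0.
split => //; split => //.
have -> : b = 2 * `|c 0 i0| => //.
apply: le_anti; apply/andP; split.
  by rewrite -hx0; exact: (Fc_bound hi0 hM).
by rewrite -(dot_vert c i0); apply: hb; exact/conv_root/vert_root.
Qed.

Lemma Fc_face (c : V) i0 (hmax : forall j, `|c 0 j| <= `|c 0 i0|) (hM : 0 < `|c 0 i0|) :
  is_face P (Fc c i0).
Proof. by exists c, (2 * `|c 0 i0|); split => // x; exact: (Fc_bound hmax hM). Qed.

Lemma Fc_lin (c : V) i0 (hmax : forall j, `|c 0 j| <= `|c 0 i0|) (hM : 0 < `|c 0 i0|) :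
  lin_span (Fc c i0) = [set x | forall j, ~~ Ic c i0 j -> x 0 j = 0].
Proof.
rewrite (lin_span_eq (@tc_F c i0) (@Fc_span c i0 hmax)).
apply/seteqP; split => x /=; first by move=> hx j hj; exact: (span_tcE hx hj).
exact: span_tc.
Qed.

Lemma Fc_dim (c : V) i0 (hmax : forall j, `|c 0 j| <= `|c 0 i0|) (hM : 0 < `|c 0 i0|) d :
  affdim (Fc c i0) d -> #|Ic c i0| = d.+1.
Proof.
move=> h; rewrite -(dim_tc c i0).
exact: (affdim_dim (twoM hM) (@Fc_dot c i0) (@tc_F c i0) (@Fc_span c i0 hmax) h).
Qed.

Lemma Fc_affdim (c : V) i0 (hmax : forall j, `|c 0 j| <= `|c 0 i0|) (hM : 0 < `|c 0 i0|) :
  affdim (Fc c i0) (#|Ic c i0|).-1.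
Proof.
rewrite -(dim_tc c i0).
exact: (affdim_make (twoM hM) (@Fc_dot c i0) (@tc_F c i0) (@Fc_span c i0 hmax)
  (Fc_i0 c i0)).
Qed.


Lemma arr_eq (hn : (2 <= n)%N) :
  arrangement P = [set H | exists k, H = [set x : V | x 0 k = 0]].
Proof.
have n0 : (0 < n)%N by lia.
apply/seteqP; split => H /=.
  move=> [F [hf [had ->]]]; have [x0 [Fx0 _]] := had.
  case: (face_cases (Ordinal n0) hf Fx0) => [FP|[c [i0 [hmax [hM FE]]]]].
    by rewrite FP in had; have := affdim_P had; lia.
  rewrite FE in had *; have hd := Fc_dim hmax hM had.
  have hC : #|[predC Ic c i0]| == 1%N.
    have := cardC (Ic c i0); rewrite card_ord hd => h; apply/eqP; move: h; set m := #|_|; lia.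
  case/card1P: hC => k hk; exists k; rewrite Fc_lin //.
  apply/seteqP; split => x /= h.
    by apply: h; have := hk k; rewrite !inE eqxx.
  by move=> j hj; have := hk j; rewrite !inE hj => /esym/eqP ->.
move=> [k ->].
have : (0 < #|predC1 k|)%N by rewrite cardC1 card_ord; lia.
case/card_gt0P => i0; rewrite inE => hi0.
pose c : V := \row_j (j != k)%:R.
have hc : forall j, `|c 0 j| = (j != k)%:R.
  by move=> j; rewrite mxE; case: (j != k); rewrite ?normr1 ?normr0.
have hmax : forall j, `|c 0 j| <= `|c 0 i0|.
  by move=> j; rewrite !hc hi0; case: (j != k).
have hM : 0 < `|c 0 i0| by rewrite hc hi0.
have hI : Ic c i0 =i predC1 k.
  move=> j; rewrite !inE /= !hc hi0; case: (j != k) => /=; first exact: eqxx.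
  by rewrite eq_sym oner_eq0.
exists (Fc c i0); split; first exact: Fc_face.
split.
  have := Fc_affdim hmax hM; rewrite (eq_card hI) cardC1 card_ord.
  by have -> : (n - 2 = n.-1.-1)%N by lia.
rewrite Fc_lin //; apply/seteqP; split => x /= h.
  by move=> j hj; have := hI j; rewrite !inE /= (negbTE hj) => /esym/negbFE/eqP ->.
by apply: h; have := hI k; rewrite !inE eqxx /= => ->.
Qed.

Lemma facet_eq (n0 : (0 < n)%N) :
  [set cone F | F in facets P] = [set orth c | c in [set c : V | forall i, c 0 i != 0]].
Proof.
apply/seteqP; split => y /=.
  move=> [F [hf had] <-]; have [x0 [Fx0 _]] := had.
  case: (face_cases (Ordinal n0) hf Fx0) => [FP|[c [i0 [hmax [hM FE]]]]].
    by rewrite FP in had; have := affdim_P had; lia.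
  rewrite FE in had *; have hd := Fc_dim hmax hM had.
  have hC : #|[predC Ic c i0]| = 0%N.
    have := cardC (Ic c i0); rewrite card_ord hd => h; move: h; set m := #|_|; lia.
  have hall : forall i, Ic c i0 i.
    by move=> i; have := card0_eq hC i; rewrite !inE => /negbFE.
  exists c; last by rewrite cone_Fc.
  move=> i; rewrite -normr_gt0 (eqP (hall i)) //.
move=> [c hc <-].
pose c' : V := \row_i (if c 0 i < 0 then -1 else 1).
have hc' : forall j, `|c' 0 j| = 1.
  by move=> j; rewrite mxE; case: (c 0 j < 0); rewrite ?normrN normr1.
set i0 := Ordinal n0.
have hmax : forall j, `|c' 0 j| <= `|c' 0 i0| by move=> j; rewrite !hc'.
have hM : 0 < `|c' 0 i0| by rewrite hc'.
have hI : forall j, Ic c' i0 j by move=> j; rewrite /= !hc'.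
have hIT : Ic c' i0 =i 'I_n by move=> j; rewrite !inE /= !hc' eqxx.
exists (Fc c' i0).
  rewrite /facets /=; split; first exact: Fc_face.
  have := Fc_affdim hmax hM; rewrite (eq_card hIT) card_ord.
  by have -> : (n - 1 = n.-1)%N by lia.
rewrite cone_Fc //; apply/seteqP; split => z /= h i; have := h i; rewrite mxE.
  case: ltP => hci.
    by rewrite mulN1r oppr_ge0 nmulr_rge0.
  by rewrite mul1r pmulr_rge0 // lt_def hc.
case: ltP => hci.
  by rewrite mulN1r oppr_ge0 nmulr_rge0.
by rewrite mul1r pmulr_rge0 // lt_def hc.
Qed.


Definition Q (x : V) := [set y : V | forall k, 0 < x 0 k * y 0 k].
Definition Unz := [set z : V | forall k, z 0 k != 0].

Lemma fk_cont (x : V) k : continuous (fun y : V => x 0 k * y 0 k).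
Proof.
move=> y.
exact: (continuous_comp (@coord_continuous R 1 n 0 k y) (@mulrl_continuous R (x 0 k) _)).
Qed.

Lemma Q_open (x : V) : open (Q x).
Proof.
rewrite openE => y Qy; rewrite /interior.
have hk : forall k, nbhs y (fun z : V => 0 < x 0 k * z 0 k).
  move=> k; have hop : open ((fun z : V => x 0 k * z 0 k) @^-1` [set r | 0 < r]).
    by apply: open_comp => [z _|]; [exact: fk_cont | exact: open_gt].
  by apply: open_nbhs_nbhs; split => //; exact: Qy.
by apply: filterS (filter_forall _ hk).
Qed.

Lemma orth_closed (x : V) : closed (orth x).
Proof.
have -> : orth x = \bigcap_(k in setT) ((fun z : V => x 0 k * z 0 k) @^-1` [set r | 0 <= r]).
  by apply/seteqP; split => y /= h; [move=> k _; exact: h | move=> k; exact: h k I].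
apply: closed_bigI => k _; apply: preimage_closed => [z _|]; [exact: fk_cont | exact: closed_ge].
Qed.

Lemma sq_gt0 (a : R) : a != 0 -> 0 < a * a.
Proof. by move=> ha; rewrite lt_def mulf_neq0 //= -expr2 sqr_ge0. Qed.

Lemma closure_Q (x : V) : (forall k, x 0 k != 0) -> closure (Q x) = orth x.
Proof.
move=> hx; apply/seteqP; split => y.
  move=> /(closureS (fun z (hz : Q x z) k => ltW (hz k))); exact: orth_closed.
move=> hy B hB.
have hg : (fun t : R => y + t *: x) @ (nbhs (0:R)) --> y + 0 *: x.
  exact: (cvgD (cvg_cst _) (cvgZl cvg_id)).
rewrite scale0r addr0 in hg.
have := hg _ hB; rewrite /= => /nbhs_ballP [e e0 he].
exists (y + (e / 2) *: x); split.
  move=> k; rewrite !mxE mulrDr; have h1 := hy k.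
  have : 0 < x 0 k * (e / 2 * x 0 k).
    by rewrite mulrCA; apply: mulr_gt0; [rewrite divr_gt0 | exact: sq_gt0].
  lra.
apply: he; rewrite /ball /= sub0r normrN ger0_norm ?divr_ge0 ?ltW //.
by move: e0 => /= e0; lra.
Qed.

Lemma comp_eq (x : V) : Unz x -> connected_component Unz x = Q x.
Proof.
move=> hx; apply/seteqP; split => y.
  move=> [C [Cx CU cC] Cy].
  suff hC : C `&` Q x = C by move: Cy; rewrite -hC => -[].
  apply: cC.
  - by exists x; split => // k; exact: sq_gt0.
  - by exists (Q x) => //; exact: Q_open.
  - exists (orth x); first exact: orth_closed.
    apply/seteqP; split => z [Cz hz]; split => // k; first exact: ltW.
    by rewrite lt_def hz andbT mulf_neq0 //; apply: CU.
move=> Qy.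
exists ((fun t : R => x + t *: (y - x)) @` `[0, 1]); last by exists 1; rewrite ?scale1r ?subrKC //= in_itv /= lexx ler01.
split.
- by exists 0; rewrite ?scale0r ?addr0 //= in_itv /= lexx ler01.
- move=> _ [t ht <-] k; move: ht; rewrite /= in_itv /= => /andP [t0 t1].
  apply/negP => /eqP h0.
  have : 0 < x 0 k * (x + t *: (y - x)) 0 k.
    rewrite !mxE.
    have hp := sq_gt0 (hx k); have hq := Qy k.
    have -> : x 0 k * (x 0 k + t * (y 0 k - x 0 k)) = (1 - t) * (x 0 k * x 0 k) + t * (x 0 k * y 0 k) by ring.
    have [->|tn1] := eqVneq t 1; first by rewrite subrr mul0r add0r mul1r.
    have : 0 < (1 - t) * (x 0 k * x 0 k) by apply: mulr_gt0 => //; rewrite subr_gt0 lt_def eq_sym tn1.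
    have : 0 <= t * (x 0 k * y 0 k) by exact: mulr_ge0 (ltW hq).
    lra.
  by rewrite h0 mulr0 ltxx.
- apply: connected_continuous_connected; first exact: segment_connected.
  apply: continuous_subspaceT => t.
  have -> : (fun t => x + t *: (y - x)) = (fun t => x + t *: (y - x)) by [].
  exact: (cvgD (cvg_cst _) (cvgZl cvg_id)).
Qed.

End Alg.

Theorem theorem4p7 (R : realType) (n : nat) (hn : (2 <= n)%N) :
  [set closure C | C in regions (arrangement (conv (@rootsC R n)))] =
  [set cone F | F in facets (conv (@rootsC R n))].
Proof.
have n0 : (0 < n)%N by lia.
rewrite (facet_eq R n0).
have hU : ~` (\bigcup_(H in arrangement (conv (@rootsC R n))) H) = @Unz R n.
  rewrite (arr_eq R hn); apply/seteqP; split => x /=.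
    move=> h k; apply/negP => /eqP xk; apply: h.
    by exists [set z : 'rV[R]_n | z 0 k = 0] => //; exists k.
  by move=> h [H [k ->] /= xk]; move: (h k); rewrite xk eqxx.
rewrite /regions hU; apply/seteqP; split => y /=.
  move=> [C [x [Ux ->]] <-]; exists x => //.
  by rewrite comp_eq // closure_Q.
move=> [c hc <-]; exists (connected_component (@Unz R n) c); first by exists c.
by rewrite comp_eq // closure_Q.
Qed.
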